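(* Let $p\ge 2$ be an integer which is not a prime, not twice an odd prime, not $4$ and not $9$. Then $\#_p<\lfloor p/2\rfloor$.
   Context: $\#_p$ denotes the number of squares in the ring $\mathbb Z/p\mathbb Z$, i.e. the cardinality of $\{n^2 \bmod p : n\in\mathbb Z\}$. *)

(* Defs.v *)
From mathcomp Require Import all_boot.
Set Implicit Arguments. Unset Strict Implicit. Unset Printing Implicit Defensive.

(* Since n^2 mod p only depends on n mod p
   (and (-n)^2 = n^2), it suffices to let n range over 0 <= n < p.
   The cardinality is the number of distinct values. *)
Definition num_squares (p : nat) : nat :=
  size (undup [seq n ^ 2 %% p | n <- iota 0 p]).

(* Main.v *)
Require Import Defs.
From mathcomp Require Import all_boot zify.

Lemma rem_step (T R : eqType) (f : T -> R) s x y :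
  uniq s -> x \in s -> y \in s -> x != y -> f x = f y ->
  size (undup (map f s)) <= size (undup (map f (rem x s))).
Proof.
move=> us xs ys nxy fxy; apply: uniq_leq_size; first exact: undup_uniq.
move=> z; rewrite !mem_undup => /mapP [w ws ->].
case: (eqVneq w x) => [->|nwx].
  rewrite fxy; apply: map_f; rewrite (mem_rem_uniq _ us) inE /= ys andbT eq_sym //.
apply: map_f; by rewrite (mem_rem_uniq _ us) inE /= nwx ws.
Qed.

Lemma two_steps (R : eqType) (f : nat -> R) s x1 y1 x2 y2 :
  uniq s -> x1 \in s -> y1 \in s -> x2 \in s -> y2 \in s ->
  y1 < x1 -> y2 < x2 -> f x1 = f y1 -> f x2 = f y2 ->
  ~ (x1 = x2 /\ y1 = y2) ->
  size (undup (map f s)) <= (size s).-2.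
Proof.
move=> us x1s y1s x2s y2s l1 l2 f1 f2 ne.
have H1 := @rem_step _ _ f s x1 y1 us x1s y1s (negbT (gtn_eqF l1)) f1.
set s' := rem x1 s.
have us' : uniq s' by exact: rem_uniq.
have ins z : z \in s -> z != x1 -> z \in s'.
  by move=> zs nz; rewrite (mem_rem_uniq _ us) inE /= nz zs.
have fin a b : a \in s' -> b \in s' -> a != b -> f a = f b ->
    size (undup (map f s)) <= (size s).-2.
  move=> as' bs' nab fab.
  have H2 := @rem_step _ _ f s' a b us' as' bs' nab fab.
  have H3 := size_undup (map f (rem a s')).
  rewrite size_map size_rem // /s' size_rem // in H3.
  exact: leq_trans H1 (leq_trans H2 H3).
case: (eqVneq x1 x2) => [e|n12].
  subst x2; apply: (fin y1 y2).
  - by apply: ins => //; rewrite ltn_eqF.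
  - by apply: ins => //; rewrite ltn_eqF.
  - by apply/eqP => e; apply: ne.
  - by rewrite -f1.
case: (eqVneq x1 y2) => [e|n1y].
  subst y2; apply: (fin x2 y1).
  - by apply: ins => //; rewrite eq_sym.
  - by apply: ins => //; rewrite ltn_eqF.
  - by rewrite gtn_eqF // (ltn_trans l1 l2).
  - by rewrite f2 f1.
apply: (fin x2 y2).
- by apply: ins => //; rewrite eq_sym.
- by apply: ins => //; rewrite eq_sym.
- by rewrite gtn_eqF.
- exact: f2.
Qed.

Lemma core p y1 u1 k1 y2 u2 k2 : 2 <= p -> 0 < u1 -> 0 < u2 ->
  (y1 + u1).*2 <= p -> (y2 + u2).*2 <= p ->
  u1 * (2 * y1 + u1) = k1 * p -> u2 * (2 * y2 + u2) = k2 * p ->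
  ~ (y1 = y2 /\ u1 = u2) -> num_squares p < p./2.
Proof.
move=> p2 u1p u2p b1 b2 e1 e2 ne.
pose f := fun n => n ^ 2 %% p.
have sq y u k : u * (2 * y + u) = k * p -> f (y + u) = f y.
  move=> e; rewrite /f; have -> : (y + u) ^ 2 = k * p + y ^ 2 by nia.
  by rewrite modnMDl.
have sym n : n < p -> f (p - n) = f n.
  move=> np; rewrite /f -(modnMDl (2 * n) ((p - n) ^ 2)).
  have -> : 2 * n * p + (p - n) ^ 2 = p * p + n ^ 2 by nia.
  by rewrite modnMDl.
have hp := odd_double_half p.
have hp' : p./2.*2 <= p <= p./2.*2.+1 by move: hp; case: (odd p) => /=; lia.
set h := p./2 in hp' *.
set s := iota 0 h.+1.
have st1 : num_squares p <= size (undup (map f s)).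
  apply: uniq_leq_size; first exact: undup_uniq.
  move=> z; rewrite !mem_undup => /mapP [n]; rewrite mem_iota => /andP[_ np] ->.
  case: (leqP n h) => hn.
    by apply/mapP; exists n => //; rewrite mem_iota; lia.
  apply/mapP; exists (p - n); last by rewrite -/(f n) -sym.
  rewrite mem_iota; lia.
have st2 : size (undup (map f s)) <= (size s).-2.
  apply: (@two_steps _ f s (y1 + u1) y1 (y2 + u2) y2).
  - exact: iota_uniq.
  - rewrite mem_iota; lia.
  - rewrite mem_iota; lia.
  - rewrite mem_iota; lia.
  - rewrite mem_iota; lia.
  - lia.
  - lia.
  - exact: sq e1.
  - exact: sq e2.
  - move=> [a b]; apply: ne; split; lia.
rewrite size_iota in st2; lia.
Qed.

Lemma fact15 : num_squares 15 < 15./2.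
Proof. by []. Qed.

Lemma comp_split n : 1 < n -> ~~ prime n ->
  exists c d, n = c * d /\ 2 <= c /\ c <= d.
Proof.
move=> n1 np.
have cp := pdiv_prime n1.
have cd := pdiv_dvd n.
set c := pdiv n in cp cd *.
have c1 := prime_gt1 cp.
have nd : n = n %/ c * c by rewrite divnK.
have d1 : 1 < n %/ c.
  case: (ltnP 1 (n %/ c)) => // hd.
  have : n %/ c = 1 by move: nd; case: (n %/ c) hd => [|[|]] //=; lia.
  move=> e; rewrite e mul1n in nd; move: np; rewrite nd cp //.
exists c, (n %/ c); split; first by rewrite mulnC.
split => //; apply: pdiv_min_dvd d1 _; apply/dvdnP; exists c; rewrite mulnC -nd //.
Qed.

Lemma odd_case p : 2 <= p -> ~~ prime p -> odd p -> p <> 9 -> num_squares p < p./2.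
Proof.
move=> p2 np op p9.
have [c [d [e [c2 cd]]]] := @comp_split p p2 np.
have : odd c && odd d by rewrite -oddM -e.
case/andP => oc od.
have hc := odd_double_half c; have hd := odd_double_half d.
rewrite oc od /= in hc hd.
move: hc hd; move: (c./2) (d./2) => a b hc hd.
case: (eqVneq p 15) => [->|p15]; first exact: fact15.
subst c d p.
have h1 : ~ (a = 1 /\ b = 1) by move=> [h3 h4]; apply: p9; rewrite h3 h4.
have h2 : ~ (a = 1 /\ b = 2) by move=> [h3 h4]; move: p15; rewrite h3 h4.
have a1 : 1 <= a by lia.
have ba : a <= b by lia.
have bnd : (1 + a.*2) * 2 + (1 + b.*2) * 2 <= (1 + a.*2) * (1 + b.*2).
  have [a2|a1'] : 2 <= a \/ a = 1 by lia.
    nia.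
  subst a; have : 3 <= b by lia. nia.
apply: (@core _ (b - a) (1 + a.*2) 1 (2 * (b - a)) (2 * (1 + a.*2)) 4); try lia.
  have -> : 2 * (b - a) + (1 + a.*2) = 1 + b.*2 by lia.
  by rewrite mul1n.
have -> : 2 * (2 * (b - a)) + 2 * (1 + a.*2) = 2 * (1 + b.*2) by lia.
move: (1 + a.*2) (1 + b.*2) => x y; nia.
Qed.

Lemma four_case p k : p = k * 4 -> p <> 4 -> 2 <= p -> num_squares p < p./2.
Proof.
move=> ek p4 p2.
have k2 : 2 <= k by lia.
apply: (@core p (k - 2) 4 2 (k - 1) 2 1); lia.
Qed.

Lemma even_odd_case p m : p = 2 * m -> odd m -> 1 < m -> ~~ prime m ->
  num_squares p < p./2.
Proof.
move=> ep om m1 nm.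
have [c [d [e [c2 cd]]]] := @comp_split m m1 nm.
have : odd c && odd d by rewrite -oddM -e.
case/andP => oc od.
have c3 : 3 <= c by move: oc c2; case: c {e cd} => [|[|[|]]].
clear nm m1 om; subst p m.
have b1 : (d + c) * 2 <= 2 * (c * d) by nia.
have b2 : 2 * d + c <= c * d by nia.
have E1 : 2 * (d - c) + 2 * c = 2 * d by lia.
have E2 : 2 * (2 * d - c) + 2 * c = 4 * d by lia.
apply: (@core _ (d - c) (2 * c) 2 (2 * d - c) (2 * c) 4); try lia.
all: rewrite ?E1 ?E2; move: c d {c2 cd oc od c3 b1 b2 E1 E2} => x y; nia.
Qed.

Theorem lemma4 (p : nat) :
  2 <= p -> ~~ prime p -> ~ (exists q, prime q /\ odd q /\ p = 2 * q) ->
  p <> 4 -> p <> 9 ->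
  num_squares p < p./2.
Proof.
move=> p2 np n2q p4 p9.
case: (boolP (odd p)) => op; first exact: odd_case.
case: (boolP (4 %| p)) => [/dvdnP [k ek]|n4]; first exact: (@four_case p k).
have hp0 := odd_double_half p; rewrite (negbTE op) /= in hp0.
have [m hp] : exists m, 0 + m.*2 = p by exists p./2.
have om : odd m.
  case: (boolP (odd m)) => // /negbTE em.
  have hm := odd_double_half m; rewrite em /= in hm.
  move: n4; rewrite -hp -hm; apply: contraNT => _; apply/dvdnP; exists (m./2); lia.
have m1 : 1 < m.
  case: (ltnP 1 m) => // hm.
  have : m = 1 by move: om hm; case: m {hp} => [|[|]].
  by move=> e; move: np; rewrite -hp e.
have nm : ~~ prime m.
  apply/negP => pm; apply: n2q; exists m; split => //; split => //; lia.
apply: (@even_odd_case p m) => //; lia.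
Qed.
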